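(* Let $(X,\rho)$ be a symmetric rack and $A=\{A_x\mid x\in X\}$ a family of abelian groups. Suppose given group isomorphisms $\phi_{x,y}:A_x\to A_{x*y}$, group homomorphisms $\psi_{x,y}:A_y\to A_{x*y}$ and $\eta_x:A_x\to A_{\rho(x)}$, and a map $\sigma$ assigning to each $(x,y)\in X\times X$ an element $\sigma_{x,y}\in A_{x*y}$. Define $\alpha_{x,y}:A_x\times A_y\to A_{x*y}$ and $\beta_x:A_x\to A_{\rho(x)}$ by $$\alpha_{x,y}(a,b)=\phi_{x,y}(a)+\psi_{x,y}(b)+\sigma_{x,y},\qquad \beta_x(a)=\eta_x(a).$$ Then: (A) $(\alpha,\beta)$ is a dynamical cocycle for the symmetric rack $(X,\rho)$ over $A$ if and only if $(A,\phi,\psi,\eta)$ is an $(X,\rho)$-module and $\sigma$ is a symmetric rack 2-cocycle. If moreover $(X,\rho)$ is a symmetric quandle, then $(\alpha,\beta)$ is a dynamical cocycle for $(X,\rho)$ over $A$ if and only if $(A,\phi,\psi,\eta)$ is an $(X,\rho)$-module (for the symmetric quandle, i.e. including (M9)) and $\sigma$ is a symmetric quandle 2-cocycle. (B) Let $\sigma'$ be another symmetric rack (respectively, quandle) 2-cocycle and $(\alpha',\beta')$ the pair defined from $\sigma'$ in the same way. If $\sigma$ and $\sigma'$ are cohomologous, then $(\alpha,\beta)$ and $(\alpha',\beta')$ are cohomologous.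
   Context: A rack is a set $X$ with binary operation $*$ such that each $x\mapsto x*y$ is bijective (inverse $x\mapsto x*^{-1}y$) and $(x*y)*z=(x*z)*(y*z)$; a quandle also satisfies $x*x=x$. A good involution is $\rho:X\to X$ with $\rho^2=\mathrm{id}$, $\rho(x*y)=\rho(x)*y$, $x*\rho(y)=x*^{-1}y$; $(X,\rho)$ is a symmetric rack (quandle). $(X,\rho)$-module: data $(A,\phi,\psi,\eta)$ as in the claim satisfying, for all $x,y,z\in X$, $a\in A_z$, $b\in A_y$: (M1) $\phi_{x*y,z}\phi_{x,y}=\phi_{x*z,y*z}\phi_{x,z}$; (M2) $\phi_{x*y,z}\psi_{x,y}=\psi_{x*z,y*z}\phi_{y,z}$; (M3) $\eta_{\rho(x)}\eta_x=\mathrm{id}$; (M4) $\eta_{x*y}\phi_{x,y}=\phi_{\rho(x),y}\eta_x$; (M5) $\psi_{\rho(x),y}=\eta_{x*y}\psi_{x,y}$; (M6) $\phi_{x*^{-1}y,y}\phi_{x,\rho(y)}=\mathrm{id}$; (M7) $\psi_{x*y,z}(a)=\phi_{x*z,y*z}\psi_{x,z}(a)+\psi_{x*z,y*z}\psi_{y,z}(a)$; (M8) $\phi_{x*^{-1}y,y}\psi_{x,\rho(y)}(\eta_y(b))=-\psi_{x*\rho(y),y}(b)$. For a symmetric quandle one additionally requires (M9) $\phi_{x,x}(a)+\psi_{x,x}(a)=a$ for all $x$, $a\in A_x$. Symmetric rack 2-cocycle: a map $\sigma$ with $\sigma_{x,y}\in A_{x*y}$ such that for all $x,y,z$: (F1)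 $\sigma_{x*y,z}+\phi_{x*y,z}(\sigma_{x,y})=\phi_{x*z,y*z}(\sigma_{x,z})+\sigma_{x*z,y*z}+\psi_{x*z,y*z}(\sigma_{y,z})$; (F2) $\sigma_{\rho(x),y}=\eta_{x*y}(\sigma_{x,y})$; (F3) $\phi_{x*\rho(y),y}(\sigma_{x,\rho(y)})=-\sigma_{x*\rho(y),y}$. A symmetric quandle 2-cocycle additionally satisfies $\sigma_{x,x}=0$ for all $x$. Two such 2-cocycles $\sigma,\sigma'$ are cohomologous if there is $\tau$ with $\tau(x)\in A_x$, $\eta_x(\tau(x))=\tau(\rho(x))$ and $\sigma_{x,y}-\sigma'_{x,y}=\phi_{x,y}(\tau(x))-\tau(x*y)+\psi_{x,y}(\tau(y))$ for all $x,y$. Dynamical cocycle of $(X,\rho)$ over a family of sets $S=\{S_x\}$: families of maps $\alpha_{x,y}:S_x\times S_y\to S_{x*y}$, $\beta_x:S_x\to S_{\rho(x)}$ such that for all $x,y,z$, $s\in S_x,t\in S_y,w\in S_z$ (writing $\alpha_{x,y}(t)(s)=\alpha_{x,y}(s,t)$): (1) $\alpha_{x,y}(t)$ is a bijection $S_x\to S_{x*y}$; (2) $\alpha_{x*y,z}(\alpha_{x,y}(s,t),w)=\alpha_{x*z,y*z}(\alpha_{x,z}(s,w),\alpha_{y,z}(t,w))$; (3) $\alpha_{\rho(x),y}(\beta_x(s),t)=\beta_{x*y}(\alpha_{x,y}(s,t))$; (4) $\beta_{\rho(x)}\beta_x(s)=s$; (5) $\alpha_{x,\rho(y)}(\beta_y(t))(s)=(\alpha_{x*^{-1}y,y}(t))^{-1}(s)$;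 and for a symmetric quandle also (6) $\alpha_{x,x}(s,s)=s$. Two dynamical cocycles $(\alpha,\beta),(\alpha',\beta')$ over $S$ are cohomologous if there are permutations $\gamma_x$ of $S_x$ with $\alpha'_{x,y}(s,t)=\gamma_{x*y}(\alpha_{x,y}(\gamma_x^{-1}(s),\gamma_y^{-1}(t)))$ and $\beta'_x(s)=\gamma_{\rho(x)}(\beta_x(\gamma_x^{-1}(s)))$. *)

(* Defs.v *)
From HB Require Import structures.
From mathcomp Require Import all_boot all_algebra.
Unset Printing Implicit Defensive.
Import GRing.Theory.
Local Open Scope ring_scope.

Definition tr (X : Type) (S : X -> Type) (x y : X) (e : x = y) (a : S x) : S y :=
  @eq_rect X x S a y e.
Arguments tr {X} S {x y} e a.

Definition deq (X : Type) (S : X -> Type) (x y : X) (a : S x) (b : S y) : Prop :=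
  forall e : x = y, tr S e a = b.
Arguments deq {X} S {x y} a b.

(* Rack: op = *, opinv = *^{-1}, the inverse of the right translation x |-> x*y. *)
Definition is_rack (X : Type) (op opinv : X -> X -> X) : Prop :=
  (forall x y : X, op (opinv x y) y = x) /\ (forall x y, opinv (op x y) y = x) /\
  (forall x y z : X, op (op x y) z = op (op x z) (op y z)).

Definition is_quandle (X : Type) (op : X -> X -> X) : Prop := forall x, op x x = x.

Definition good_involution (X : Type) (op opinv : X -> X -> X) (rho : X -> X) : Prop :=
  (forall x, rho (rho x) = x) /\ (forall x y : X, rho (op x y) = op (rho x) y) /\
  (forall x y : X, op x (rho y) = opinv x y).

Definition is_hom (G H : zmodType) (f : G -> H) : Prop := forall a b, f (a + b) = f a + f b.

Section Defs.
Variables (X : Type) (op opinv : X -> X -> X) (rho : X -> X) (A : X -> zmodType).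
Let AT := fun z => (A z : Type).
Variables (phi : forall x y, A x -> A (op x y)) (psi : forall x y, A y -> A (op x y)) (eta : forall x, A x -> A (rho x)).

Definition module_rack : Prop :=
  (forall (x y z : X) (a : A x),
      deq AT (phi (op x y) z (phi x y a)) (phi (op x z) (op y z) (phi x z a))) /\
  (forall (x y z : X) (b : A y),
      deq AT (phi (op x y) z (psi x y b)) (psi (op x z) (op y z) (phi y z b))) /\
  (forall (x : X) (a : A x), deq AT (eta (rho x) (eta x a)) a) /\
  (forall (x y : X) (a : A x),
      deq AT (eta (op x y) (phi x y a)) (phi (rho x) y (eta x a))) /\
  (forall (x y : X) (b : A y), deq AT (psi (rho x) y b) (eta (op x y) (psi x y b))) /\
  (forall (x y : X) (a : A x) (e : op x (rho y) = opinv x y),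
      deq AT (phi (opinv x y) y (tr AT e (phi x (rho y) a))) a) /\
  (forall (x y z : X) (a : A z),
      deq AT (psi (op x y) z a)
        (phi (op x z) (op y z) (psi x z a) + psi (op x z) (op y z) (psi y z a))) /\
  (forall (x y : X) (b : A y) (e : op x (rho y) = opinv x y),
      deq AT (phi (opinv x y) y (tr AT e (psi x (rho y) (eta y b))))
             (- psi (op x (rho y)) y b)).

Definition module_quandle : Prop :=
  module_rack /\ (forall (x : X) (a : A x), deq AT (phi x x a + psi x x a) a).

Variable sigma : forall x y, A (op x y).

Definition cocycle_rack : Prop :=
  (forall x y z : X,
      deq AT (sigma (op x y) z + phi (op x y) z (sigma x y))
        (phi (op x z) (op y z) (sigma x z) + sigma (op x z) (op y z)
         + psi (op x z) (op y z) (sigma y z))) /\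
  (forall x y : X, deq AT (sigma (rho x) y) (eta (op x y) (sigma x y))) /\
  (forall x y : X,
      phi (op x (rho y)) y (sigma x (rho y)) = - sigma (op x (rho y)) y).

Definition cocycle_quandle : Prop := cocycle_rack /\ (forall x, sigma x x = 0).

Definition cohomologous (sigma' : forall x y, A (op x y)) : Prop :=
  exists tau : forall x, A x,
    (forall x, eta x (tau x) = tau (rho x)) /\
    (forall x y : X, sigma x y - sigma' x y
                 = phi x y (tau x) - tau (op x y) + psi x y (tau y)).

Definition alpha_of : forall x y, A x -> A y -> A (op x y) :=
  fun x y a b => phi x y a + psi x y b + sigma x y.

End Defs.

Section Dyn.
Variables (X : Type) (op opinv : X -> X -> X) (rho : X -> X) (S : X -> Type).

(* Dynamical cocycle; alpha x y s t stands for alpha_{x,y}(s,t) = alpha_{x,y}(t)(s). *)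
Definition dyn_cocycle_rack (alpha : forall x y, S x -> S y -> S (op x y))
    (beta : forall x, S x -> S (rho x)) : Prop :=
  (forall (x y : X) (t : S y), bijective (fun s : S x => alpha x y s t)) /\
  (forall (x y z : X) (s : S x) (t : S y) (w : S z),
      deq S (alpha (op x y) z (alpha x y s t) w)
            (alpha (op x z) (op y z) (alpha x z s w) (alpha y z t w))) /\
  (forall (x y : X) (s : S x) (t : S y),
      deq S (alpha (rho x) y (beta x s) t) (beta (op x y) (alpha x y s t))) /\
  (forall (x : X) (s : S x), deq S (beta (rho x) (beta x s)) s) /\
  (* (5): alpha_{x,rho y}(beta_y t) is the two-sided inverse of alpha_{x*^{-1}y,y}(t),
     fibres being identified via x*rho(y) = x*^{-1}y and (x*^{-1}y)*y = x *)
  (forall (x y : X) (t : S y),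
      (forall (e : op x (rho y) = opinv x y) (s : S x),
          deq S (alpha (opinv x y) y (tr S e (alpha x (rho y) s (beta y t))) t) s) /\
      (forall (e : op (opinv x y) y = x) (u : S (opinv x y)),
          deq S (alpha x (rho y) (tr S e (alpha (opinv x y) y u t)) (beta y t)) u)).

Definition dyn_cocycle_quandle alpha beta : Prop :=
  dyn_cocycle_rack alpha beta /\ (forall (x : X) (s : S x), deq S (alpha x x s s) s).

Definition dyn_cohomologous (alpha alpha' : forall x y, S x -> S y -> S (op x y))
    (beta beta' : forall x, S x -> S (rho x)) : Prop :=
  exists (gamma gammainv : forall x, S x -> S x),
    (forall x, cancel (gamma x) (gammainv x) /\ cancel (gammainv x) (gamma x)) /\
    (forall (x y : X) (s : S x) (t : S y),
        alpha' x y s t = gamma (op x y) (alpha x y (gammainv x s) (gammainv y t))) /\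
    (forall (x : X) (s : S x), beta' x s = gamma (rho x) (beta x (gammainv x s))).

End Dyn.

(* Main.v *)
From Stdlib Require Import ProofIrrelevance.
Require Import Defs.
From HB Require Import structures.
From mathcomp Require Import all_boot all_algebra.
Import GRing.Theory.
Local Open Scope ring_scope.

Section G.
Context {X : Type} {A : X -> zmodType}.
Lemma trD x y (e : x = y) (a b : A x) :
  tr (fun z => A z) e (a + b) = tr (fun z => A z) e a + tr (fun z => A z) e b.
Proof. by case: y / e. Qed.
Lemma tr0 x y (e : x = y) : tr (fun z => A z) e (0 : A x) = 0.
Proof. by case: y / e. Qed.
Lemma trN x y (e : x = y) (a : A x) : tr (fun z => A z) e (- a) = - tr (fun z => A z) e a.
Proof. by case: y / e. Qed.
Lemma trK x y (e : x = y) (a : A x) : tr (fun z => A z) (esym e) (tr (fun z => A z) e a) = a.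
Proof. by case: y / e. Qed.
Lemma tr_eq0 x y (e : x = y) (a : A x) : tr (fun z => A z) e a = 0 -> a = 0.
Proof. by case: y / e. Qed.
Lemma deqP x y (h : x = y) (a : A x) (b : A y) :
  deq (fun z => A z) a b <-> tr (fun z => A z) h a = b.
Proof. split; first by apply. by move=> H e; rewrite (proof_irrelevance _ e h). Qed.
Lemma deq_sym x y (a : A x) (b : A y) : deq (fun z => A z) a b -> deq (fun z => A z) b a.
Proof. move=> H e; rewrite -(H (esym e)); by case: x / e a H. Qed.
Lemma tr_dep (g : X -> X) (F : forall u, A (g u)) u v (e : u = v) :
  tr (fun z => A z) (congr1 g e) (F u) = F v.
Proof. by case: v / e. Qed.
Lemma tr_fun (g : X -> X) (F : forall u, A u -> A (g u)) u v (e : u = v) (a : A u) :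
  F v (tr (fun z => A z) e a) = tr (fun z => A z) (congr1 g e) (F u a).
Proof. by case: v / e. Qed.
Lemma aff x y (e : x = y) (P C : A x) (Q D : A y) :
  tr (fun z => A z) e (P + C) = Q + D -> tr (fun z => A z) e C = D -> tr (fun z => A z) e P = Q.
Proof. by rewrite trD => H1 H2; move: H1; rewrite H2 => /addIr. Qed.
End G.
Arguments tr_eq0 {X A x y e a}.
Arguments deq_sym {X A x y a b}.

Lemma hom0 {G H : zmodType} {f : G -> H} : is_hom _ _ f -> f 0 = 0.
Proof. move=> h; apply: (@addrI _ (f 0)). by rewrite -h !addr0. Qed.
Lemma homN {G H : zmodType} {f : G -> H} : is_hom _ _ f -> forall a, f (- a) = - f a.
Proof. move=> h a; apply: (@addrI _ (f a)); by rewrite -h !subrr (hom0 h). Qed.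


Lemma aff2 {X : Type} {A : X -> zmodType} {x y} {e : x = y} {L P C : A x} {R Q D : A y} :
  tr (fun z => A z) e L = R -> tr (fun z => A z) e C = D -> L = P + C -> R = Q + D ->
  tr (fun z => A z) e P = Q.
Proof. move=> H1 H2 E1 E2; eapply aff; last exact H2. by rewrite -E1 -E2. Qed.
Lemma trK' {X : Type} (A : X -> zmodType) x y (e : x = y) (a : A y) :
  tr (fun z => A z) e (tr (fun z => A z) (esym e) a) = a.
Proof. by case: y / e a. Qed.
Lemma tr_dep' {X : Type} (A : X -> zmodType) (g : X -> X) (F : forall u, A (g u)) {u v} (e : u = v)
  (e' : g u = g v) : tr (fun z => A z) e' (F u) = F v.
Proof. rewrite (proof_irrelevance _ e' (congr1 g e)); exact: (@tr_dep X A). Qed.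

Ltac canc1 :=
  match goal with
  | |- - ?b + ?r = 0 =>
      try rewrite (addrC _ b);
      do 12 try rewrite (addrCA _ b);
      first [ rewrite addNKr | rewrite addrN | rewrite addNr | rewrite addKr ]
  | |- ?a + ?r = 0 =>
      try rewrite (addrC _ (- a));
      do 12 try rewrite (addrCA _ (- a));
      first [ rewrite addNKr | rewrite addrN | rewrite addNr | rewrite addKr ]
  end.
Ltac ac := apply/eqP; rewrite -subr_eq0; apply/eqP;
  rewrite ?opprD ?opprK ?oppr0 ?addr0 ?add0r -?addrA; repeat canc1; by [].

Theorem theorem4p1 (X : Type) (op opinv : X -> X -> X) (rho : X -> X)
    (A : X -> zmodType)
    (phi : forall x y, A x -> A (op x y)) (psi : forall x y, A y -> A (op x y))
    (eta : forall x, A x -> A (rho x))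
    (sigma : forall x y, A (op x y)) :
  is_rack X op opinv -> good_involution X op opinv rho ->
  (forall x y, is_hom _ _ (phi x y) /\ bijective (phi x y)) ->
  (forall x y, is_hom _ _ (psi x y)) ->
  (forall x, is_hom _ _ (eta x)) ->
  (* (A), symmetric rack *)
  (dyn_cocycle_rack X op opinv rho (fun z => A z) (alpha_of X op A phi psi sigma) eta
   <-> module_rack X op opinv rho A phi psi eta
       /\ cocycle_rack X op rho A phi psi eta sigma) /\
  (* (A), symmetric quandle *)
  (is_quandle X op ->
   (dyn_cocycle_quandle X op opinv rho (fun z => A z) (alpha_of X op A phi psi sigma) eta
    <-> module_quandle X op opinv rho A phi psi eta
        /\ cocycle_quandle X op rho A phi psi eta sigma)) /\
  (* (B), symmetric rack 2-cocycles *)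
  (forall sigma' : forall x y, A (op x y),
     module_rack X op opinv rho A phi psi eta ->
     cocycle_rack X op rho A phi psi eta sigma ->
     cocycle_rack X op rho A phi psi eta sigma' ->
     cohomologous X op rho A phi psi eta sigma sigma' ->
     dyn_cohomologous X op rho (fun z => A z)
       (alpha_of X op A phi psi sigma) (alpha_of X op A phi psi sigma') eta eta) /\
  (* (B), symmetric quandle 2-cocycles *)
  (forall sigma' : forall x y, A (op x y),
     is_quandle X op ->
     module_quandle X op opinv rho A phi psi eta ->
     cocycle_quandle X op rho A phi psi eta sigma ->
     cocycle_quandle X op rho A phi psi eta sigma' ->
     cohomologous X op rho A phi psi eta sigma sigma' ->
     dyn_cohomologous X op rho (fun z => A z)
       (alpha_of X op A phi psi sigma) (alpha_of X op A phi psi sigma') eta eta).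
Proof.
move=> Hr Hi Hphi Hpsi Heta.
have [r1 [r2 r3]] := Hr. have [i1 [i2 i3]] := Hi.
have phiD : forall x y a b, phi x y (a + b) = phi x y a + phi x y b := fun x y => (Hphi x y).1.
have phi0 : forall x y, phi x y 0 = 0 := fun x y => hom0 (Hphi x y).1.
have phiN : forall x y a, phi x y (- a) = - phi x y a := fun x y => homN (Hphi x y).1.
have psiD : forall x y a b, psi x y (a + b) = psi x y a + psi x y b := fun x y => Hpsi x y.
have psi0 : forall x y, psi x y 0 = 0 := fun x y => hom0 (Hpsi x y).
have psiN : forall x y a, psi x y (- a) = - psi x y a := fun x y => homN (Hpsi x y).
have etaD : forall x a b, eta x (a + b) = eta x a + eta x b := fun x => Heta x.
have eta0 : forall x, eta x 0 = 0 := fun x => hom0 (Heta x).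
have etaN : forall x a, eta x (- a) = - eta x a := fun x => homN (Heta x).
have RA : dyn_cocycle_rack X op opinv rho (fun z => A z) (alpha_of X op A phi psi sigma) eta
   <-> module_rack X op opinv rho A phi psi eta
       /\ cocycle_rack X op rho A phi psi eta sigma.
  rewrite /dyn_cocycle_rack /module_rack /cocycle_rack /alpha_of /=.
  split.
    move=> [D1 [D2 [D3 [D4 D5]]]].
    have C2 : forall x y z (e : op (op x y) z = op (op x z) (op y z)),
      tr (fun z => A z) e (phi (op x y) z (sigma x y) + sigma (op x y) z)
      = phi (op x z) (op y z) (sigma x z) + psi (op x z) (op y z) (sigma y z) + sigma (op x z) (op y z).
      by move=> x y z e; move: (D2 x y z 0 0 0 e); rewrite ?phiD ?psiD ?etaD ?eta0 ?phi0 ?psi0 ?eta0 ?phi0 ?psi0 ?add0r ?addr0 ?add0r ?addr0.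
    have F2 : forall x y, deq (fun z => A z) (sigma (rho x) y) (eta (op x y) (sigma x y)).
      by move=> x y e; move: (D3 x y 0 0 e); rewrite ?phiD ?psiD ?etaD ?eta0 ?phi0 ?psi0 ?eta0 ?phi0 ?psi0 ?add0r ?addr0 ?add0r ?addr0.
    have C5 : forall x y (e : op x (rho y) = opinv x y) (e' : op (opinv x y) y = x),
      tr (fun z => A z) e' (phi (opinv x y) y (tr (fun z => A z) e (sigma x (rho y))) + sigma (opinv x y) y) = 0.
      by move=> x y e e'; move: ((D5 x y 0).1 e 0 e'); rewrite ?phiD ?psiD ?etaD ?eta0 ?phi0 ?psi0 ?eta0 ?phi0 ?psi0 ?add0r ?addr0 ?add0r ?addr0.
    split. split.
      by move=> x y z a e; apply: (aff2 (D2 x y z a 0 0 e) (C2 x y z e)); rewrite ?phiD ?psiD ?etaD ?eta0 ?phi0 ?psi0 ?eta0 ?phi0 ?psi0 ?add0r ?addr0 ?add0r ?addr0; ac.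
    split.
      by move=> x y z b e; apply: (aff2 (D2 x y z 0 b 0 e) (C2 x y z e)); rewrite ?phiD ?psiD ?etaD ?eta0 ?phi0 ?psi0 ?eta0 ?phi0 ?psi0 ?add0r ?addr0 ?add0r ?addr0; ac.
    split; first exact: D4.
    split.
      by move=> x y a; apply: deq_sym => e; apply: (aff2 (D3 x y a 0 e) (F2 x y e)); rewrite ?phiD ?psiD ?etaD ?eta0 ?phi0 ?psi0 ?eta0 ?phi0 ?psi0 ?add0r ?addr0 ?add0r ?addr0; ac.
    split.
      by move=> x y b e; apply: (aff2 (D3 x y 0 b e) (F2 x y e)); rewrite ?phiD ?psiD ?etaD ?eta0 ?phi0 ?psi0 ?eta0 ?phi0 ?psi0 ?add0r ?addr0 ?add0r ?addr0; ac.
    split.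
      by move=> x y a e e'; apply: (aff2 ((D5 x y 0).1 e a e') (C5 x y e e')); rewrite ?phiD ?psiD ?etaD ?eta0 ?phi0 ?psi0 ?eta0 ?phi0 ?psi0 ?add0r ?addr0 ?add0r ?addr0; rewrite ?trD; rewrite ?phiD ?psiD ?etaD ?eta0 ?phi0 ?psi0 ?eta0 ?phi0 ?psi0 ?add0r ?addr0 ?add0r ?addr0; ac.
    split.
      by move=> x y z a e; apply: (aff2 (D2 x y z 0 0 a e) (C2 x y z e)); rewrite ?phiD ?psiD ?etaD ?eta0 ?phi0 ?psi0 ?eta0 ?phi0 ?psi0 ?add0r ?addr0 ?add0r ?addr0; ac.
    move=> x y b e e''.
    have H : tr (fun z => A z) (r1 x y) (phi (opinv x y) y (tr (fun z => A z) e (psi x (rho y) (eta y b)))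
                + psi (opinv x y) y b) = 0.
      by apply: (aff2 ((D5 x y b).1 e 0 (r1 x y)) (C5 x y e (r1 x y))); rewrite ?phiD ?psiD ?etaD ?eta0 ?phi0 ?psi0 ?eta0 ?phi0 ?psi0 ?add0r ?addr0 ?add0r ?addr0; rewrite ?trD; rewrite ?phiD ?psiD ?etaD ?eta0 ?phi0 ?psi0 ?eta0 ?phi0 ?psi0 ?add0r ?addr0 ?add0r ?addr0; ac.
    move/tr_eq0: H => /eqP; rewrite addr_eq0 => /eqP ->.
    rewrite trN; congr (- _).
    exact: (tr_dep' A (fun u => op u y) (fun u => psi u y b) (esym e) e'').
    split.
      by move=> x y z e; rewrite addrC C2; ac.
    split; first exact: F2.
    move=> x y.
    have G : forall u (e : op x (rho y) = u),
        phi u y (tr (fun z => A z) e (sigma x (rho y))) + sigma u y = 0 ->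
        phi (op x (rho y)) y (sigma x (rho y)) = - sigma (op x (rho y)) y.
      by move=> u e; case: u / e => /= /eqP; rewrite addr_eq0 => /eqP.
    exact: (G _ _ (tr_eq0 (C5 x y (i3 x y) (r1 x y)))).
  move=> [[M1 [M2 [M3 [M4 [M5 [M6 [M7 M8]]]]]]] [F1 [F2 F3]]].
  have P5 : forall (x y : X) (t : A y) (e : op x (rho y) = opinv x y) (s : A x),
     deq (fun z : X => A z)
       (phi (opinv x y) y
          (tr (fun z : X => A z) e
             (phi x (rho y) s + psi x (rho y) (eta y t) + sigma x (rho y))) +
        psi (opinv x y) y t + sigma (opinv x y) y) s.
    move=> x y t e s e'.
    have HQ2 : phi (opinv x y) y (tr (fun z => A z) e (sigma x (rho y))) + sigma (opinv x y) y = 0.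
      have G : forall u (e0 : op x (rho y) = u),
          phi u y (tr (fun z => A z) e0 (sigma x (rho y))) + sigma u y = 0.
        by move=> u e0; case: u / e0 => /=; rewrite F3 addNr.
      exact: G.
    have HQ1 : phi (opinv x y) y (tr (fun z => A z) e (psi x (rho y) (eta y t))) + psi (opinv x y) y t = 0.
      pose e'' := congr1 (fun u => op u y) (esym e).
      apply: (@tr_eq0 _ _ _ _ e'').
      have HT : tr (fun z => A z) e'' (psi (opinv x y) y t) = psi (op x (rho y)) y t :=
        tr_dep' A (fun u => op u y) (fun u => psi u y t) (esym e) e''.
      by rewrite trD HT (M8 x y t e e'') addNr.
    have E : phi (opinv x y) y (tr (fun z : X => A z) e
             (phi x (rho y) s + psi x (rho y) (eta y t) + sigma x (rho y))) +
        psi (opinv x y) y t + sigma (opinv x y) y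
        = phi (opinv x y) y (tr (fun z : X => A z) e (phi x (rho y) s))
          + (phi (opinv x y) y (tr (fun z => A z) e (psi x (rho y) (eta y t))) + psi (opinv x y) y t)
          + (phi (opinv x y) y (tr (fun z => A z) e (sigma x (rho y))) + sigma (opinv x y) y).
      by rewrite !trD !phiD; ac.
    by rewrite E HQ1 HQ2 !addr0 (M6 x y s e e').
  split.
    move=> x y t. have [g g1 g2] := (Hphi x y).2.
    exists (fun u => g (u - sigma x y - psi x y t)) => s /=.
      by rewrite !addrK g1.
    by rewrite g2 !subrK.
  split.
    move=> x y z s t w e. rewrite ?phiD ?psiD ?etaD ?eta0 ?phi0 ?psi0 ?eta0 ?phi0 ?psi0 ?add0r ?addr0 ?add0r ?addr0. rewrite !trD.
    rewrite (M1 x y z s e) (M2 x y z t e) (M7 x y z w e).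
    have F1' := F1 x y z e. rewrite trD in F1'.
    rewrite -(addrK (tr (fun z => A z) e (phi (op x y) z (sigma x y))) (tr (fun z => A z) e (sigma (op x y) z))) F1'.
    ac.
  split.
    move=> x y s t e. rewrite ?phiD ?psiD ?etaD ?eta0 ?phi0 ?psi0 ?eta0 ?phi0 ?psi0 ?add0r ?addr0 ?add0r ?addr0. rewrite !trD.
    by rewrite (F2 x y e) (M5 x y t e) (deq_sym (M4 x y s) e).
  split; first exact: M3.
  move=> x y t; split; first exact: P5.
  move=> e' u e.
  have [h h1 h2] := (Hphi x (rho y)).2.
  have Hs0 : tr (fun z => A z) e (phi x (rho y) (h (tr (fun z => A z) (esym e) u - sigma x (rho y) - psi x (rho y) (eta y t)))
       + psi x (rho y) (eta y t) + sigma x (rho y)) = u.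
    by rewrite h2 !subrK trK'.
  by rewrite -Hs0 (P5 x y t e _ e').
split; first exact RA.
have HB : forall sigma' : forall x y : X, A (op x y),
     module_rack X op opinv rho A phi psi eta ->
     cocycle_rack X op rho A phi psi eta sigma ->
     cocycle_rack X op rho A phi psi eta sigma' ->
     cohomologous X op rho A phi psi eta sigma sigma' ->
     dyn_cohomologous X op rho (fun z => A z)
       (alpha_of X op A phi psi sigma) (alpha_of X op A phi psi sigma') eta eta.
  move=> sigma' _ _ _ [tau [T1 T2]].
  exists (fun x a => a + tau x), (fun x a => a - tau x).
  split; first by move=> x; split => a; rewrite ?addrK ?subrK.
  split.
    move=> x y s t; rewrite /alpha_of.
    have E : sigma' x y = sigma x y - (phi x y (tau x) - tau (op x y) + psi x y (tau y)).
      by rewrite -T2 opprB addrC subrK.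
    rewrite E phiD psiD phiN psiN; ac.
  by move=> x s; rewrite etaD etaN T1 subrK.
split.
  move=> Hq. rewrite /dyn_cocycle_quandle /module_quandle /cocycle_quandle.
  split.
    move=> [Dr D6]. have [Mr Cr] := RA.1 Dr.
    have S0 : forall x, sigma x x = 0.
      move=> x; apply: (@tr_eq0 _ _ _ _ (Hq x)).
      move: (D6 x 0 (Hq x)); rewrite /alpha_of phi0 psi0 !add0r; by move=> ->.
    split; first split; first exact Mr.
      by move=> x a e; move: (D6 x a e); rewrite /alpha_of S0 addr0.
    by split; [exact Cr | exact S0].
  move=> [[Mr M9] [Cr S0]]; split; first exact: (RA.2 (conj Mr Cr)).
  by move=> x s e; rewrite /alpha_of S0 addr0; exact: M9 x s e.
split; first exact HB.
move=> sigma' _ [Mr _] [Cr _] [Cr' _] Hc; exact: HB sigma' Mr Cr Cr' Hc.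
Qed.
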